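(* Let $r\ge1$ and let $\mathcal{P}$ be any partition of $[r]^2=\{1,\dots,r\}\times\{1,\dots,r\}$. Then the set of subgroups $\{G\subseteq\mathfrak{S}_r: [r]^2/G\text{ refines }\mathcal{P}\}$ forms a lattice under subgroup inclusion.
   Context: $\mathfrak{S}_r$ acts on $[r]^2$ diagonally, $\sigma(i,j)=(\sigma(i),\sigma(j))$, and $[r]^2/G$ denotes the partition of $[r]^2$ into $G$-orbits. A partition $Q$ refines $\mathcal{P}$ if every block of $Q$ is contained in some block of $\mathcal{P}$. *)

(* Defs.v *)
From mathcomp Require Import all_boot all_order all_fingroup.
Set Implicit Arguments. Unset Strict Implicit. Unset Printing Implicit Defensive.

Definition diag_orbit (r : nat) (G : {set {perm 'I_r}}) (x : 'I_r * 'I_r)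
  : {set 'I_r * 'I_r} :=
  [set ((s : {perm 'I_r}) x.1, s x.2) | s in G].

Definition diag_orbits (r : nat) (G : {set {perm 'I_r}})
  : {set {set 'I_r * 'I_r}} :=
  [set diag_orbit G x | x in [set: 'I_r * 'I_r]].

Definition refines (T : finType) (Q P : {set {set T}}) : Prop :=
  forall B, B \in Q -> exists2 C, C \in P & B \subset C.

(* Main.v *)
Require Import Defs.
From mathcomp Require Import all_boot all_order all_fingroup.

Section Aux.
Variables (r : nat) (P : {set {set 'I_r * 'I_r}}).
Hypothesis hP : partition P [set: 'I_r * 'I_r].

Definition okp (s : {perm 'I_r}) :=
  [forall x : 'I_r * 'I_r, pblock P (s x.1, s x.2) == pblock P x].

Definition Sf := [set s | okp s].

Lemma Sf_group : group_set Sf.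
Proof.
apply/group_setP; split.
  by rewrite inE; apply/forallP => -[a b]; rewrite /= !perm1.
move=> s t; rewrite !inE => /forallP hs /forallP ht; apply/forallP => -[a b] /=.
rewrite !permM; move: (ht (s a, s b)) (hs (a, b)) => /= /eqP -> /eqP -> //.
Qed.

Canonical Sf_grp := Group Sf_group.

Lemma cov x : x \in cover P.
Proof. by case/and3P: hP => /eqP -> _ _; rewrite inE. Qed.

Lemma refinesP (K : {group {perm 'I_r}}) :
  refines (diag_orbits K) P <-> K \subset Sf.
Proof.
have tI : trivIset P by case/and3P: hP.
split.
  move=> hR; apply/subsetP => s sK; rewrite inE; apply/forallP => x.
  have Bin : diag_orbit K x \in diag_orbits K by apply: imset_f; rewrite inE.
  have [C CP BC] := hR _ Bin.
  have xB : x \in diag_orbit K x.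
    by apply/imsetP; exists 1%g; [exact: group1 | by rewrite !perm1 -surjective_pairing].
  have sxB : (s x.1, s x.2) \in diag_orbit K x by apply/imsetP; exists s.
  rewrite (def_pblock tI CP (subsetP BC _ xB)).
  by rewrite (def_pblock tI CP (subsetP BC _ sxB)).
move=> hS B /imsetP [x _ ->].
exists (pblock P x); first exact: pblock_mem (cov x).
apply/subsetP => y /imsetP [s sK ->].
move: (subsetP hS s sK); rewrite inE => /forallP /(_ x) /eqP <-.
by rewrite mem_pblock cov.
Qed.
End Aux.

Theorem lemma2p8 (r : nat) (hr : 1 <= r)
  (P : {set {set 'I_r * 'I_r}}) (hP : partition P [set: 'I_r * 'I_r]) :
  forall G H : {group {perm 'I_r}},
    refines (diag_orbits G) P -> refines (diag_orbits H) P ->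
    (exists J : {group {perm 'I_r}},
       [/\ refines (diag_orbits J) P, G \subset J, H \subset J &
         forall K : {group {perm 'I_r}}, refines (diag_orbits K) P ->
           G \subset K -> H \subset K -> J \subset K]) /\
    (exists M : {group {perm 'I_r}},
       [/\ refines (diag_orbits M) P, M \subset G, M \subset H &
         forall K : {group {perm 'I_r}}, refines (diag_orbits K) P ->
           K \subset G -> K \subset H -> K \subset M]).
Proof.
move=> G H /(@refinesP r P hP) hG /(@refinesP r P hP) hH; split.
  exists (<<G :|: H>>)%G; split.
  - by apply/(@refinesP r P hP); rewrite gen_subG subUset hG hH.
  - by apply: subset_trans (joing_subl G H).
  - by apply: subset_trans (joing_subr G H).
  - by move=> K _ GK HK; rewrite gen_subG subUset GK HK.
exists (G :&: H)%G; split.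
- by apply/(@refinesP r P hP); apply: subset_trans (subsetIl _ _) hG.
- exact: subsetIl.
- exact: subsetIr.
- by move=> K _ KG KH; rewrite subsetI KG KH.
Qed.
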